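(* Let $(A,\mu_A,\alpha_A)$, $(B,\mu_B,\alpha_B)$, $(C,\mu_C,\alpha_C)$ be Hom-associative algebras and $R_1:B\otimes A\to A\otimes B$, $R_2:C\otimes B\to B\otimes C$, $R_3:C\otimes A\to A\otimes C$ Hom-twisting maps satisfying $(\mathrm{id}_A\otimes R_2)\circ(R_3\otimes\mathrm{id}_B)\circ(\mathrm{id}_C\otimes R_1)=(R_1\otimes\mathrm{id}_C)\circ(\mathrm{id}_B\otimes R_3)\circ(R_2\otimes\mathrm{id}_A)$. Define $P_1:C\otimes(A\otimes_{R_1}B)\to(A\otimes_{R_1}B)\otimes C$, $P_1=(\mathrm{id}_A\otimes R_2)\circ(R_3\otimes\mathrm{id}_B)$, and $P_2:(B\otimes_{R_2}C)\otimes A\to A\otimes(B\otimes_{R_2}C)$, $P_2=(R_1\otimes\mathrm{id}_C)\circ(\mathrm{id}_B\otimes R_3)$. Then $P_1$ is a Hom-twisting map between $A\otimes_{R_1}B$ and $C$, $P_2$ is a Hom-twisting map between $A$ and $B\otimes_{R_2}C$, and the Hom-associative algebras $(A\otimes_{R_1}B)\otimes_{P_1}C$ and $A\otimes_{P_2}(B\otimes_{R_2}C)$ coincide.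
   Context: Algebras over a field $k$, not assumed unital. A Hom-associative algebra is $(A,\mu,\alpha)$ with $\alpha(aa')=\alpha(a)\alpha(a')$, $\alpha(a)(a'a'')=(aa')\alpha(a'')$. For Hom-associative algebras $(A,\mu_A,\alpha_A),(B,\mu_B,\alpha_B)$, a Hom-twisting map between $A$ and $B$ is a linear $R:B\otimes A\to A\otimes B$ with $(\alpha_A\otimes\alpha_B)\circ R=R\circ(\alpha_B\otimes\alpha_A)$, $R\circ(\alpha_B\otimes\mu_A)=(\mu_A\otimes\alpha_B)\circ(\mathrm{id}_A\otimes R)\circ(R\otimes\mathrm{id}_A)$, $R\circ(\mu_B\otimes\alpha_A)=(\alpha_A\otimes\mu_B)\circ(R\otimes\mathrm{id}_B)\circ(\mathrm{id}_B\otimes R)$. The Hom-twisted tensor product $A\otimes_R B$ is the Hom-associative algebra $A\otimes B$ with product $(\mu_A\otimes\mu_B)\circ(\mathrm{id}_A\otimes R\otimes\mathrm{id}_B)$, i.e. $(a\otimes b)(a'\otimes b')=aa'_R\otimes b_Rb'$ where $R(b\otimes a)=a_R\otimes b_R$, and structure map $\alpha_A\otimes\alpha_B$. *)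

(* Defs.v *)
From HB Require Import structures.
From mathcomp Require Import all_boot all_algebra.
From mathcomp Require Import boolp classical_sets functions.
Set Implicit Arguments. Unset Strict Implicit. Unset Printing Implicit Defensive.
Import GRing.Theory.
Local Open Scope ring_scope.

(* Model: U \otimes V is the k-span, inside the space of functions               *)
(*   U^* -> V^* -> k,  of the pure tensors  u \otimes v := (f, g) |-> f u * g v. *)
(* Over a field the canonical map from the abstract tensor product into this *)
(* function space is injective, so this is (isomorphic to) U \otimes V.          *)
Section TensorDef.
Variables (k : fieldType) (U V : lmodType k).

Definition dual (W : lmodType k) := {linear W -> k^o}.

Definition pure_fun (u : U) (v : V) : dual U -> dual V -> k^o :=
  fun f g => f u * g v.

Definition is_tensor (phi : dual U -> dual V -> k^o) : Prop :=
  exists s : seq (U * V), phi = \sum_(p <- s) pure_fun p.1 p.2.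

Definition tensor_pred : {pred dual U -> dual V -> k^o} :=
  fun phi => `[< is_tensor phi >].

Lemma tensor_pred_closed : GRing.subsemimod_closed tensor_pred.
Proof.
split; [split|].
- by apply/asboolP; exists [::]; rewrite big_nil.
- move=> x y /asboolP [s ->] /asboolP [t ->]; apply/asboolP.
  by exists (s ++ t); rewrite big_cat.
- move=> a x /asboolP [s ->]; apply/asboolP.
  exists [seq (a *: p.1, p.2) | p <- s]; rewrite big_map scaler_sumr.
  apply: eq_bigr => p _; apply/funext => f; apply/funext => g.
  by rewrite /pure_fun /= linearZ /= -mulrA.
Qed.

HB.instance Definition _ := GRing.isSubmodClosed.Build k _ tensor_pred
  tensor_pred_closed.

Record tensor_type := Tensor {
  tensor_val : dual U -> dual V -> k^o;
  tensor_valP : tensor_val \in tensor_pred }.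

HB.instance Definition _ := [isSub for tensor_val].
HB.instance Definition _ := [Choice of tensor_type by <:].
HB.instance Definition _ := [SubChoice_isSubLmodule of tensor_type by <:].

Definition tensor : lmodType k := tensor_type.

Lemma pure_tensor_subproof (u : U) (v : V) : pure_fun u v \in tensor_pred.
Proof. by apply/asboolP; exists [:: (u, v)]; rewrite big_seq1. Qed.

Definition tens (u : U) (v : V) : tensor := Tensor (pure_tensor_subproof u v).

Lemma tensor_repr_subproof (x : tensor) :
  exists s : seq (U * V), x = \sum_(p <- s) tens p.1 p.2.
Proof.
case: x => phi Hphi; have /asboolP [s e] := Hphi.
exists s; apply: val_inj => /=.
rewrite e {e Hphi}; elim: s => [|p s IH]; first by rewrite !big_nil.
by rewrite !big_cons IH.
Qed.

Definition trepr (x : tensor) : seq (U * V) :=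
  projT1 (cid (tensor_repr_subproof x)).

(* The linear map U \otimes V -> W induced by a (bilinear) map U -> V -> W,
   defined on a representative; it is independent of the representative
   whenever f is bilinear, which is the only case used below. *)
Definition tlift (W : zmodType) (f : U -> V -> W) (x : tensor) : W :=
  \sum_(p <- trepr x) f p.1 p.2.

End TensorDef.

Arguments tensor {k} U V.
Arguments tens {k U V}.
Arguments tlift {k U V W}.

Notation "U '\otimes' V" := (tensor U V) (at level 40, left associativity).
Notation "u '\ot' v" := (tens u v) (at level 40, left associativity).

Section TensorOps.
Variable k : fieldType.

Definition tmap (U V U' V' : lmodType k) (f : U -> U') (g : V -> V') :
  U \otimes V -> U' \otimes V' := tlift (fun u v => f u \ot g v).

Definition tassoc (U V W : lmodType k) : (U \otimes V) \otimes W -> U \otimes (V \otimes W) :=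
  tlift (fun t w => tlift (fun u v => u \ot (v \ot w)) t).

Definition tassocV (U V W : lmodType k) : U \otimes (V \otimes W) -> (U \otimes V) \otimes W :=
  tlift (fun u t => tlift (fun v w => (u \ot v) \ot w) t).

Definition tmul (A : lmodType k) (mul : A -> A -> A) : A \otimes A -> A :=
  tlift mul.

End TensorOps.

Arguments tassoc {k U V W}.
Arguments tassocV {k U V W}.

Section HomAlg.
Variable k : fieldType.

(* (A, mul, alpha) is a (not necessarily unital) Hom-associative algebra:
   mul is bilinear (i.e. a linear map A \otimes A -> A), alpha is linear,
   alpha is multiplicative and the Hom-associativity law holds. *)
Definition HomAssoc (A : lmodType k) (mul : A -> A -> A) (alpha : A -> A) : Prop :=
  [/\ (forall a, linear (mul a)), (forall b, linear (mul ^~ b)),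
      linear alpha,
      (forall a a', alpha (mul a a') = mul (alpha a) (alpha a')) &
      (forall a a' a'', mul (alpha a) (mul a' a'') = mul (mul a a') (alpha a''))].

(* Triple tensor products are bracketed explicitly, the
   canonical associativity isomorphisms being inserted where needed. *)
Definition HomTwisting (A B : lmodType k) (muA : A -> A -> A) (alA : A -> A)
    (muB : B -> B -> B) (alB : B -> B) (R : B \otimes A -> A \otimes B) : Prop :=
  [/\ linear R,
      tmap alA alB \o R = R \o tmap alB alA,
      R \o tmap alB (tmul muA)
        = tmap (tmul muA) alB \o tassocV \o tmap id R \o tassoc
            \o tmap R id \o tassocV &
      R \o tmap (tmul muB) alA
        = tmap alA (tmul muB) \o tassoc \o tmap R id \o tassocV
            \o tmap id R \o tassoc].

(* multiplication of the Hom-twisted tensor product A \otimes_R B: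
   (a \otimes b)(a' \otimes b') = a a'_R \otimes b_R b'  where R(b \otimes a') = a'_R \otimes b_R *)
Definition twisted_mul (A B : lmodType k) (muA : A -> A -> A)
    (muB : B -> B -> B) (R : B \otimes A -> A \otimes B) (x y : A \otimes B) : A \otimes B :=
  tlift (fun a b => tlift (fun a' b' =>
     tmap (muA a) (muB ^~ b') (R (b \ot a'))) y) x.

Definition twisted_alpha (A B : lmodType k) (alA : A -> A) (alB : B -> B) :
  A \otimes B -> A \otimes B := tmap alA alB.

End HomAlg.

(* Main.v *)
Require Import Defs.
From HB Require Import structures.
From mathcomp Require Import all_boot all_algebra.
From mathcomp Require Import boolp classical_sets functions.
From Corelib Require Import Setoid Morphisms.
Set Implicit Arguments. Unset Strict Implicit. Unset Printing Implicit Defensive.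
Import GRing.Theory.
Local Open Scope ring_scope.
Local Open Scope classical_set_scope.

Section Sep.
Variables (k : fieldType) (U : lmodType k).

Definition spanS n (w : 'I_n -> U) (x : U) :=
  exists c : 'I_n -> k, x = \sum_i c i *: w i.

Lemma sep_exists n (w : 'I_n -> U) (u : U) : ~ spanS w u ->
  exists f : U -> k^o, [/\ linear f, (forall i, f (w i) = 0) & f u = 1].
Proof.
move=> nsu.
pose Sb (M : set U) := [/\ (forall a x y, M x -> M y -> M (a *: x + y)),
   M 0, (forall i, M (w i)) & ~ M u].
pose P (M : set U) := M = set0 \/ Sb M.
have SbS : Sb (spanS w).
  split.
  - move=> a x y [c ->] [d ->]; exists (fun i => a * c i + d i).
    rewrite scaler_sumr -big_split /=; apply: eq_bigr => i _.
    by rewrite scalerDl scalerA.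
  - by exists (fun=> 0); rewrite big1 // => i _; rewrite scale0r.
  - move=> i; exists (fun j => (j == i)%:R).
    rewrite (bigD1 i) //= eqxx scale1r big1 ?addr0 // => j /negPf ->.
    by rewrite scale0r.
  - exact: nsu.
have nonemp M : P M -> forall x, M x -> Sb M.
  by case=> [->|//] x.
have [A [PA maxA]] : exists A, P A /\ forall B, A `<` B -> ~ P B.
  apply: Zorn_bigcup => F FP Ftot.
  have [[X0 FX0 [x0 X0x0]]|none] :=
    pselect (exists2 X, F X & exists x, X x).
  - right; have SX0 := nonemp _ (FP _ FX0) _ X0x0.
    case: SX0 => _ X00 X0w X0u.
    split.
    + move=> a x y [X1 FX1 X1x] [X2 FX2 X2y].
      have [s12|s21] := Ftot _ _ FX1 FX2.
      * have [c _ _ _] := nonemp _ (FP _ FX2) _ X2y.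
        by exists X2 => //; apply: c => //; apply: s12.
      * have [c _ _ _] := nonemp _ (FP _ FX1) _ X1x.
        by exists X1 => //; apply: c => //; apply: s21.
    + by exists X0.
    + by move=> i; exists X0.
    + move=> [X FX Xu]; have [_ _ _] := nonemp _ (FP _ FX) _ Xu; exact.
  - left; apply/seteqP; split => // x [X FX Xx].
    by exfalso; apply: none; exists X => //; exists x.
have SA : Sb A.
  case: PA => // A0; exfalso; apply: (maxA (spanS w)); last by right.
  rewrite A0; split; first exact: sub0set.
  case: SbS => _ h0 _ _ => /(_ 0 h0) //.
case: SA => Acl A0 Aw Au.
have Asc a x : A x -> A (a *: x) by move=> Ax; rewrite -[_ *: _]addr0; apply: (Acl).
have Asub x y : A x -> A y -> A (x - y).
  by move=> Ax Ay; rewrite addrC -scaleN1r; apply: (Acl).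
have key x : exists c : k, A (x - c *: u).
  have [Ax|nAx] := pselect (A x); first by exists 0; rewrite scale0r subr0.
  pose B := [set y | exists m c, A m /\ y = m + c *: x].
  have [[m [c [Am ue]]]|nBu] := pselect (B u).
    have [c0|cn0] := eqVneq c 0.
      by exfalso; apply: (Au); rewrite ue c0 scale0r addr0.
    exists c^-1; have -> : x - c^-1 *: u = c^-1 *: (- m).
      rewrite ue scalerDr scalerA mulVf // scale1r scalerN opprD addrA.
      by rewrite addrAC subrr add0r.
    by apply: (Asc); rewrite -scaleN1r; apply: (Asc).
  exfalso; apply: (maxA B); last first.
    right; split.
    - move=> a y z [m1 [c1 [Am1 ->]]] [m2 [c2 [Am2 ->]]].
      exists (a *: m1 + m2), (a * c1 + c2); split; first exact: Acl.
      by rewrite scalerDr scalerDl scalerA addrACA.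
    - by exists 0, 0; rewrite scale0r addr0.
    - by move=> i; exists (w i), 0; rewrite scale0r addr0.
    - exact: nBu.
  split.
  - by move=> y Ay; exists y, 0; rewrite scale0r addr0.
  - move=> ABsub; apply: nAx; have : B x by exists 0, 1; rewrite scale1r add0r.
    by move/ABsub.
have uniq x c1 c2 : A (x - c1 *: u) -> A (x - c2 *: u) -> c1 = c2.
  move=> h1 h2; apply/eqP; apply/negPn/negP => ne.
  have := Asub _ _ h2 h1.
  rewrite opprB addrA addrAC [x - _ - x]addrAC subrr add0r addrC -scalerBl => h.
  apply: (Au); have := Asc (c1 - c2)^-1 _ h.
  by rewrite scalerA mulVf ?scale1r // subr_eq0.
pose f x := projT1 (cid (key x)).
have fP x : A (x - f x *: u) by rewrite /f; case: cid.
exists f; split.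
- move=> a x y; apply: (uniq (a *: x + y)); first exact: fP.
  have e : a *: (x - f x *: u) + (y - f y *: u)
     = a *: x + y - (a * f x + f y) *: u.
    by rewrite scalerDl scalerBr scalerA opprD addrACA.
  by move: (Acl a _ _ (fP x) (fP y)); rewrite e.
- move=> i; apply: (uniq (w i)); first exact: fP.
  by rewrite scale0r subr0.
- apply: (uniq u); first exact: fP.
  by rewrite scale1r subrr.
Qed.

End Sep.
Section MkLin.
Variables (k : fieldType) (U : lmodType k) (f : U -> k^o).
Definition mklin (hf : linear f) := f.
HB.instance Definition _ (hf : linear f) :=
  GRing.isLinear.Build k U k^o *:%R (mklin hf) hf.
End MkLin.

Section LinBasics.
Variables (k : fieldType).
Implicit Types U V W : lmodType k.

Lemma linD U V (f : U -> V) : linear f -> forall x y, f (x + y) = f x + f y.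
Proof. move=> hf x y. have := hf 1 x y. rewrite !scale1r. done. Qed.
Lemma lin0 U V (f : U -> V) : linear f -> f 0 = 0.
Proof. by move=> hf; apply/(addrI (f 0)); rewrite -linD // !addr0. Qed.
Lemma linZ U V (f : U -> V) : linear f -> forall a x, f (a *: x) = a *: f x.
Proof. by move=> hf a x; rewrite -[a *: x]addr0 hf lin0 // addr0. Qed.
Lemma linN U V (f : U -> V) : linear f -> forall x, f (- x) = - f x.
Proof. by move=> hf x; rewrite -scaleN1r linZ // scaleN1r. Qed.
Lemma lin_sum U V (f : U -> V) (hf : linear f) I (r : seq I) (P : pred I) (h : I -> U) :
  f (\sum_(i <- r | P i) h i) = \sum_(i <- r | P i) f (h i).
Proof.
elim: r => [|i r IH]; first by rewrite !big_nil lin0.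
by rewrite !big_cons; case: (P i); rewrite ?linD ?IH.
Qed.
Lemma lin_id U : linear (@id U).
Proof. by []. Qed.
Lemma lin_comp U V W (f : V -> W) (g : U -> V) :
  linear f -> linear g -> linear (fun x => f (g x)).
Proof. by move=> hf hg a x y; rewrite hg hf. Qed.
Lemma lin_sumf U V I (r : seq I) (h : I -> U -> V) :
  (forall i, linear (h i)) -> linear (fun x => \sum_(i <- r) h i x).
Proof.
move=> hh a x y; elim: r => [|i r IH]; first by rewrite !big_nil scaler0 addr0.
by rewrite !big_cons IH hh scalerDr addrACA.
Qed.
End LinBasics.

Section TensorWD.
Variables (k : fieldType) (U V : lmodType k).

Lemma dual_sep (v : V) : (forall g : dual V, g v = 0) -> v = 0.
Proof.
move=> h; apply/eqP/negPn/negP => nv.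
have nsp : ~ spanS (fun i : 'I_0 => v) v.
  by move=> [c]; rewrite big_ord0 => /eqP; rewrite (negPf nv).
have [f [hf _ fv]] := sep_exists nsp.
have := h (mklin hf); rewrite /= /mklin fv => /eqP; by rewrite oner_eq0.
Qed.

Lemma tens_linl (v : V) : linear (fun u : U => u \ot v).
Proof.
move=> a x y; apply: val_inj; apply/funext => f; apply/funext => g.
rewrite /= /pure_fun /=.
rewrite [in LHS]GRing.linearP /=.
apply: (etrans (y := a * (f x * g v) + f y * g v)); first by rewrite mulrDl mulrA.
by [].
Qed.

Lemma tens_linr (u : U) : linear (fun v : V => u \ot v).
Proof.
move=> a x y; apply: val_inj; apply/funext => f; apply/funext => g.
rewrite /= /pure_fun /=.
rewrite [in LHS]GRing.linearP /=.
apply: (etrans (y := a * (f u * g x) + f u * g y)); first by rewrite mulrDr mulrCA.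
by [].
Qed.

Lemma tens_val_sum n (us : 'I_n -> U) (vs : 'I_n -> V) f g :
  tensor_val (\sum_i us i \ot vs i) f g = \sum_i f (us i) * g (vs i).
Proof.
elim: n us vs => [|n IH] us vs; first by rewrite !big_ord0.
by rewrite !big_ord_recl -IH.
Qed.

Definition bilin (W : lmodType k) (F : U -> V -> W) :=
  (forall u, linear (F u)) /\ (forall v, linear (F ^~ v)).

Lemma bilin_tens : bilin (@tens k U V).
Proof. by split=> [u|v]; [apply: tens_linr | apply: tens_linl]. Qed.

Lemma reduce_step (W : lmodType k) (G : U -> V -> W) n (us : 'I_n.+1 -> U) (vs : 'I_n.+1 -> V)
   (c : 'I_n -> k) : bilin G ->
  us ord0 = \sum_i c i *: us (lift ord0 i) ->
  \sum_i G (us i) (vs i) =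
  \sum_(i < n) G (us (lift ord0 i)) (vs (lift ord0 i) + c i *: vs ord0).
Proof.
move=> [G1 G2] e; rewrite big_ord_recl e (lin_sum (G2 _)).
rewrite -big_split /=; apply: eq_bigr => i _.
by rewrite (linZ (G2 _)) (linD (G1 _)) (linZ (G1 _)) addrC.
Qed.

Lemma wd_ord (W : lmodType k) (F : U -> V -> W) : bilin F ->
  forall n (us : 'I_n -> U) (vs : 'I_n -> V),
  \sum_i us i \ot vs i = 0 -> \sum_i F (us i) (vs i) = 0.
Proof.
move=> bF; elim=> [|n IH] us vs; first by rewrite !big_ord0.
move=> e0.
have [[c sp]|nsp] := pselect (spanS (fun i : 'I_n => us (lift ord0 i)) (us ord0)).
  rewrite (reduce_step _ bF sp); apply: IH.
  by rewrite -(reduce_step _ bilin_tens sp).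
have [f [hf f0 f1]] := sep_exists nsp.
have v0 : vs ord0 = 0.
  apply: dual_sep => g.
  have := congr1 (fun t => tensor_val t (mklin hf) g) e0.
  rewrite tens_val_sum big_ord_recl /= /mklin f1 mul1r big1 ?addr0 //.
  by move=> i _; rewrite f0 mul0r.
move: e0; rewrite !big_ord_recl v0.
rewrite (lin0 (tens_linr _)) (lin0 (bF.1 _)) !add0r; exact: IH.
Qed.

Lemma wd_seq (W : lmodType k) (F : U -> V -> W) : bilin F -> forall s : seq (U * V),
  \sum_(p <- s) p.1 \ot p.2 = 0 -> \sum_(p <- s) F p.1 p.2 = 0.
Proof.
move=> bF s; rewrite !(big_nth (0, 0)) !big_mkord.
exact: (wd_ord bF).
Qed.

Lemma tlift_sum (W : lmodType k) (F : U -> V -> W) (s : seq (U * V)) : bilin F ->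
  tlift F (\sum_(p <- s) p.1 \ot p.2) = \sum_(p <- s) F p.1 p.2.
Proof.
move=> bF; rewrite /tlift /trepr; case: cid => r /= e.
apply/eqP; rewrite -subr_eq0; apply/eqP.
pose t := r ++ [seq (- p.1, p.2) | p <- s].
have ht : \sum_(p <- t) p.1 \ot p.2 = 0.
  rewrite big_cat big_map /= -e.
  rewrite [X in _ + X](eq_bigr (fun p => - (p.1 \ot p.2))); last first.
    by move=> p _; rewrite (linN (tens_linl _)).
  by rewrite sumrN subrr.
have := wd_seq bF ht; rewrite big_cat big_map /=.
rewrite [X in _ + X](eq_bigr (fun p => - (F p.1 p.2))); last first.
  by move=> p _; rewrite (linN (bF.2 _)).
by rewrite sumrN.
Qed.

Lemma tliftE (W : lmodType k) (F : U -> V -> W) u v : bilin F -> tlift F (u \ot v) = F u v.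
Proof.
move=> bF; have := tlift_sum [:: (u, v)] bF; by rewrite !big_seq1.
Qed.

Lemma tlift_lin (W : lmodType k) (F : U -> V -> W) : bilin F -> linear (tlift F).
Proof.
move=> bF a x y.
have [r ->] := tensor_repr_subproof x; have [s ->] := tensor_repr_subproof y.
have -> : a *: \sum_(p <- r) p.1 \ot p.2 + \sum_(p <- s) p.1 \ot p.2
  = \sum_(p <- [seq (a *: q.1, q.2) | q <- r] ++ s) p.1 \ot p.2.
  rewrite big_cat big_map scaler_sumr; congr (_ + _).
  by apply: eq_bigr => p _; rewrite (linZ (tens_linl _)).
rewrite !tlift_sum // big_cat big_map scaler_sumr; congr (_ + _).
by apply: eq_bigr => p _; rewrite (linZ (bF.2 _)).
Qed.

Lemma tlift_ext (W : lmodType k) (F G : U -> V -> W) t :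
  (forall u v, F u v = G u v) -> tlift F t = tlift G t.
Proof. by move=> e; apply: eq_bigr => p _; rewrite e. Qed.

Lemma tlift_push (W W' : lmodType k) (g : W -> W') (F : U -> V -> W) t : linear g ->
  g (tlift F t) = tlift (fun u v => g (F u v)) t.
Proof. by move=> hg; rewrite /tlift (lin_sum hg). Qed.

Lemma tlift_param (W W' : lmodType k) (F : W -> U -> V -> W') t :
  (forall u v, linear (fun w => F w u v)) -> linear (fun w => tlift (F w) t).
Proof. by move=> h; apply: lin_sumf => p; apply: h. Qed.

Lemma tens_ext (W : lmodType k) (f g : U \otimes V -> W) : linear f -> linear g ->
  (forall u v, f (u \ot v) = g (u \ot v)) -> forall x, f x = g x.
Proof.
move=> hf hg e x; have [r ->] := tensor_repr_subproof x.
by rewrite (lin_sum hf) (lin_sum hg); apply: eq_bigr => p _; apply: e.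
Qed.

Lemma tlift_swap (W U' V' : lmodType k) (F : U -> V -> U' -> V' -> W) t s :
  tlift (fun u v => tlift (F u v) s) t =
  tlift (fun u' v' => tlift (fun u v => F u v u' v') t) s.
Proof. by rewrite /tlift; apply: exchange_big. Qed.

End TensorWD.

Section Struct.
Variable k : fieldType.
Implicit Types U V W X Y Z : lmodType k.

Lemma lin_app1 X Y Z (h : X -> Y -> Z) (b : Y) U (g : U -> X) :
  linear (fun y => h y b) -> linear g -> linear (fun x => h (g x) b).
Proof. by move=> h1 h2; apply: (lin_comp h1 h2). Qed.

Lemma tmapE U V X Y (f : U -> X) (g : V -> Y) u v :
  linear f -> linear g -> tmap f g (u \ot v) = f u \ot g v.
Proof.
move=> hf hg; rewrite /tmap tliftE //; split => [x|y].
- exact: (lin_comp (tens_linr _) hg).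
- exact: (lin_comp (tens_linl _) hf).
Qed.

Lemma tmap_lin U V X Y (f : U -> X) (g : V -> Y) :
  linear f -> linear g -> linear (tmap f g).
Proof.
move=> hf hg; apply: tlift_lin; split => [x|y].
- exact: (lin_comp (tens_linr _) hg).
- exact: (lin_comp (tens_linl _) hf).
Qed.

Lemma tassoc_bilin U V W :
  bilin (fun (t : U \otimes V) (w : W) => tlift (fun u v => u \ot (v \ot w)) t).
Proof.
split => [t|w].
- apply: tlift_param => u v; exact: (lin_comp (tens_linr _) (tens_linr _)).
- apply: tlift_lin; split => [u|v].
  + exact: (lin_comp (tens_linr _) (tens_linl _)).
  + exact: tens_linl.
Qed.

Lemma tassocV_bilin U V W :
  bilin (fun (u : U) (t : V \otimes W) => tlift (fun v w => (u \ot v) \ot w) t).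
Proof.
split => [u|t].
- apply: tlift_lin; split => [v|w].
  + exact: tens_linr.
  + exact: (lin_comp (tens_linl _) (tens_linr _)).
- apply: tlift_param => v w; exact: (lin_comp (tens_linl _) (tens_linl _)).
Qed.

Lemma tassoc_lin U V W : linear (@tassoc k U V W).
Proof. exact: (tlift_lin (tassoc_bilin U V W)). Qed.
Lemma tassocV_lin U V W : linear (@tassocV k U V W).
Proof. exact: (tlift_lin (tassocV_bilin U V W)). Qed.

Lemma tassocE U V W (t : U \otimes V) (w : W) :
  tassoc (t \ot w) = tlift (fun u v => u \ot (v \ot w)) t.
Proof. by rewrite /tassoc tliftE //; apply: tassoc_bilin. Qed.
Lemma tassocVE U V W (u : U) (t : V \otimes W) :
  tassocV (u \ot t) = tlift (fun v w => (u \ot v) \ot w) t.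
Proof. by rewrite /tassocV tliftE //; apply: tassocV_bilin. Qed.

Lemma tassocE3 U V W (u : U) (v : V) (w : W) :
  tassoc ((u \ot v) \ot w) = u \ot (v \ot w).
Proof.
rewrite tassocE tliftE //; split => [x|y].
- exact: (lin_comp (tens_linr _) (tens_linl _)).
- exact: tens_linl.
Qed.
Lemma tassocVE3 U V W (u : U) (v : V) (w : W) :
  tassocV (u \ot (v \ot w)) = (u \ot v) \ot w.
Proof.
rewrite tassocVE tliftE //; split => [x|y].
- exact: tens_linr.
- exact: (lin_comp (tens_linl _) (tens_linr _)).
Qed.


End Struct.

Ltac lin_hyp :=
  match goal with
  | H : linear _ |- _ => apply: (H)
  | H : forall _, linear _ |- _ => apply: (H)
  end.

Ltac lin := cbv beta; first
  [ exact: lin_id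
  | apply: tens_linl
  | apply: tens_linr
  | apply: tassoc_lin
  | apply: tassocV_lin
  | lin_hyp
  | (apply: tmap_lin; lin)
  | (apply: tlift_lin; bil)
  | (apply: tlift_param => ? ?; lin)
  | (apply: lin_comp; lin)
  | (apply: lin_app1; lin) ]
with bil := split => ?; lin.


Section Struct2.
Variable k : fieldType.
Implicit Types U V W X Y Z : lmodType k.

Lemma tassocK U V W (x : (U \otimes V) \otimes W) : tassocV (tassoc x) = x.
Proof.
apply: (tens_ext (f := fun x => tassocV (tassoc x)) (g := id)); try lin.
move=> t w; apply: (tens_ext (f := fun t => tassocV (tassoc (t \ot w)))
                             (g := fun t => t \ot w)); try lin.
by move=> u v; rewrite tassocE3 tassocVE3.
Qed.

Lemma tassocVK U V W (x : U \otimes (V \otimes W)) : tassoc (tassocV x) = x.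
Proof.
apply: (tens_ext (f := fun x => tassoc (tassocV x)) (g := id)); try lin.
move=> u t; apply: (tens_ext (f := fun t => tassoc (tassocV (u \ot t)))
                             (g := fun t => u \ot t)); try lin.
by move=> v w; rewrite tassocVE3 tassocE3.
Qed.

Lemma tmulE U (mu : U -> U -> U) a b : bilin mu -> tmul mu (a \ot b) = mu a b.
Proof. by move=> hm; rewrite /tmul tliftE. Qed.

End Struct2.

#[global] Instance tlift_proper (k : fieldType) (U V : lmodType k) (W : zmodType) :
  Proper (pointwise_relation U (pointwise_relation V eq) ==> eq ==> eq)
    (@tlift k U V W).
Proof. by move=> F G e t _ <-; apply: eq_bigr => p _; apply: e. Qed.

Section Push.
Variable k : fieldType.
Implicit Types U V W X Y Z : lmodType k.

Lemma tlift_tlift U V X Y W (F : X -> Y -> W) (G : U -> V -> X \otimes Y) t :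
  bilin F -> tlift F (tlift G t) = tlift (fun u v => tlift F (G u v)) t.
Proof. by move=> bF; rewrite tlift_push //; apply: tlift_lin. Qed.

Lemma tmap_tlift U V X Y X' Y' (f : X -> X') (g : Y -> Y') (G : U -> V -> X \otimes Y) t :
  linear f -> linear g -> tmap f g (tlift G t) = tlift (fun u v => tmap f g (G u v)) t.
Proof. by move=> hf hg; rewrite tlift_push //; apply: tmap_lin. Qed.

Lemma tassoc_tlift U V X Y Z (G : U -> V -> (X \otimes Y) \otimes Z) t :
  tassoc (tlift G t) = tlift (fun u v => tassoc (G u v)) t.
Proof. by rewrite tlift_push //; apply: tassoc_lin. Qed.

Lemma tassocV_tlift U V X Y Z (G : U -> V -> X \otimes (Y \otimes Z)) t :
  tassocV (tlift G t) = tlift (fun u v => tassocV (G u v)) t.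
Proof. by rewrite tlift_push //; apply: tassocV_lin. Qed.

Lemma tensl_tlift U V X Y (G : U -> V -> X) t (y : Y) :
  (tlift G t) \ot y = tlift (fun u v => G u v \ot y) t.
Proof. by rewrite (tlift_push (g := fun x => x \ot y)) //; apply: tens_linl. Qed.

Lemma tensr_tlift U V X Y (G : U -> V -> Y) t (x : X) :
  x \ot (tlift G t) = tlift (fun u v => x \ot G u v) t.
Proof. by rewrite (tlift_push (g := fun y => x \ot y)) //; apply: tens_linr. Qed.

Lemma tmapE2 U V X Y (f : U -> X) (g : V -> Y) :
  linear f -> linear g -> forall u v, tmap f g (u \ot v) = f u \ot g v.
Proof. by move=> hf hg u v; rewrite tmapE. Qed.

Lemma tmulE2 U (mu : U -> U -> U) : bilin mu -> forall a b, tmul mu (a \ot b) = mu a b.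
Proof. by move=> hm a b; rewrite tmulE. Qed.

Lemma tmap_paraml W U V X Y (f : W -> U -> X) (g : V -> Y) z :
  (forall u, linear (fun w => f w u)) -> linear (fun w => tmap (f w) g z).
Proof.
move=> h; apply: tlift_param => u v.
exact: (lin_comp (tens_linl _) (h u)).
Qed.

Lemma tmap_paramr W U V X Y (f : U -> X) (g : W -> V -> Y) z :
  (forall v, linear (fun w => g w v)) -> linear (fun w => tmap f (g w) z).
Proof.
move=> h; apply: tlift_param => u v.
exact: (lin_comp (tens_linr _) (h v)).
Qed.

End Push.

Ltac lin2 := cbv beta; first
  [ exact: lin_id
  | apply: tens_linl
  | apply: tens_linr
  | apply: tassoc_lin
  | apply: tassocV_lin
  | lin_hyp
  | (apply: tmap_lin; lin2)
  | (apply: tlift_lin; bil2)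
  | (apply: tlift_param => ? ?; lin2)
  | (apply: tmap_paraml => ?; lin2)
  | (apply: tmap_paramr => ?; lin2)
  | (apply: lin_comp; [ | lazymatch goal with |- linear (fun x => x) => fail | _ => idtac end]; lin2)
  | (apply: lin_app1; lin2) ]
with bil2 := split => ?; lin2.


Local Close Scope classical_set_scope.

Section TwMul.
Variable k : fieldType.
Variables (A B : lmodType k) (muA : A -> A -> A) (muB : B -> B -> B)
  (R : B \otimes A -> A \otimes B).
Hypotheses (hA1 : forall a, linear (muA a)) (hA2 : forall b, linear (muA ^~ b))
  (hB1 : forall a, linear (muB a)) (hB2 : forall b, linear (muB ^~ b))
  (hR : linear R).

Lemma twisted_mulE a b a' b' :
  twisted_mul muA muB R (a \ot b) (a' \ot b') =
  tlift (fun x y => muA a x \ot muB y b') (R (b \ot a')).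
Proof.
rewrite /twisted_mul tliftE; last by timeout 20 bil2.
by rewrite tliftE //; bil2.
Qed.

Lemma twisted_mul_bilin : bilin (twisted_mul muA muB R).
Proof. rewrite /twisted_mul; timeout 20 bil2. Qed.

End TwMul.


Lemma tliftE2 (k : fieldType) (U V W : lmodType k) (F : U -> V -> W) :
  bilin F -> forall u v, tlift F (u \ot v) = F u v.
Proof. by move=> bF u v; rewrite tliftE. Qed.

Lemma tlift_tlift2 (k : fieldType) (U V X Y W : lmodType k) (F : X -> Y -> W) :
  bilin F -> forall (G : U -> V -> X \otimes Y) t,
  tlift F (tlift G t) = tlift (fun u v => tlift F (G u v)) t.
Proof. by move=> bF G t; rewrite tlift_tlift. Qed.

Lemma lin_tlift2 (k : fieldType) (U V X W : lmodType k) (g : X -> W) :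
  linear g -> forall (G : U -> V -> X) t,
  g (tlift G t) = tlift (fun u v => g (G u v)) t.
Proof. by move=> hg G t; rewrite tlift_push. Qed.

Lemma tlift_id (k : fieldType) (U V : lmodType k) (t : U \otimes V) :
  tlift (fun u v => u \ot v) t = t.
Proof. by rewrite /tlift /trepr; case: cid. Qed.

Lemma tmap_tlift2 (k : fieldType) (U V X Y X' Y' : lmodType k) (f : X -> X') (g : Y -> Y') :
  linear f -> linear g -> forall (G : U -> V -> X \otimes Y) t,
  tmap f g (tlift G t) = tlift (fun u v => tmap f g (G u v)) t.
Proof. by move=> hf hg G t; rewrite tmap_tlift. Qed.

Section Tw.
Variable k : fieldType.
Variables (A B : lmodType k) (muA : A -> A -> A) (alA : A -> A)
  (muB : B -> B -> B) (alB : B -> B) (R : B \otimes A -> A \otimes B).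
Hypotheses (hA1 : forall a, linear (muA a)) (hA2 : forall b, linear (muA ^~ b))
  (hB1 : forall a, linear (muB a)) (hB2 : forall b, linear (muB ^~ b))
  (halA : linear alA) (halB : linear alB)
  (HT : HomTwisting muA alA muB alB R).

Let hR : linear R. Proof. by case: HT. Qed.
Let bA : bilin muA. Proof. by split. Qed.
Let bB : bilin muB. Proof. by split. Qed.
Let lmA : linear (tmul muA). Proof. exact: tlift_lin. Qed.
Let lmB : linear (tmul muB). Proof. exact: tlift_lin. Qed.

Lemma tw_alpha b a :
  tlift (fun x y => alA x \ot alB y) (R (b \ot a)) = R (alB b \ot alA a).
Proof.
case: HT => _ Ha _ _.
by have := congr1 (fun f => f (b \ot a)) Ha; rewrite /= tmapE.
Qed.

Lemma tw_muA b a a' :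
  R (alB b \ot muA a a') =
  tlift (fun u v => tlift (fun x y => muA u x \ot alB y) (R (v \ot a'))) (R (b \ot a)).
Proof.
case: HT => _ _ H _.
have := congr1 (fun f => f (b \ot (a \ot a'))) H; rewrite /= tmapE // tmulE // => ->.
rewrite tassocVE3 tmapE // tassocE tmap_tlift //.
setoid_rewrite (tmapE2 (@lin_id _ _) hR).
rewrite tassocV_tlift.
setoid_rewrite tassocVE.
rewrite tmap_tlift //.
setoid_rewrite (tmap_tlift2 lmA halB).
setoid_rewrite (tmapE2 lmA halB).
by setoid_rewrite (tmulE2 bA).
Qed.

Lemma tw_muB b b' a :
  R (muB b b' \ot alA a) =
  tlift (fun u v => tlift (fun x y => alA x \ot muB y v) (R (b \ot u))) (R (b' \ot a)).
Proof.
case: HT => _ _ _ H.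
have := congr1 (fun f => f ((b \ot b') \ot a)) H; rewrite /= tmapE // tmulE // => ->.
rewrite tassocE3 tmapE // tassocVE tmap_tlift //.
setoid_rewrite (tmapE2 hR (@lin_id _ _)).
rewrite tassoc_tlift.
setoid_rewrite tassocE.
rewrite tmap_tlift //.
setoid_rewrite (tmap_tlift2 halA lmB).
setoid_rewrite (tmapE2 halA lmB).
setoid_rewrite (tmulE2 bB).
by [].
Qed.

Lemma twc_alpha (W : lmodType k) (F : A -> B -> W) b a : bilin F ->
  tlift F (R (alB b \ot alA a)) = tlift (fun x y => F (alA x) (alB y)) (R (b \ot a)).
Proof.
move=> bF; rewrite -tw_alpha tlift_tlift //.
by setoid_rewrite (tliftE2 bF).
Qed.

Lemma twc_muA (W : lmodType k) (F : A -> B -> W) b a a' : bilin F ->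
  tlift F (R (alB b \ot muA a a')) =
  tlift (fun u v => tlift (fun x y => F (muA u x) (alB y)) (R (v \ot a'))) (R (b \ot a)).
Proof.
move=> bF; rewrite tw_muA tlift_tlift //.
setoid_rewrite (tlift_tlift2 bF).
by setoid_rewrite (tliftE2 bF).
Qed.

Lemma twc_muB (W : lmodType k) (F : A -> B -> W) b b' a : bilin F ->
  tlift F (R (muB b b' \ot alA a)) =
  tlift (fun u v => tlift (fun x y => F (alA x) (muB y v)) (R (b \ot u))) (R (b' \ot a)).
Proof.
move=> bF; rewrite tw_muB tlift_tlift //.
setoid_rewrite (tlift_tlift2 bF).
by setoid_rewrite (tliftE2 bF).
Qed.

End Tw.

Section YBE.
Variable k : fieldType.
Variables (A B C : lmodType k) (R1 : B \otimes A -> A \otimes B)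
  (R2 : C \otimes B -> B \otimes C) (R3 : C \otimes A -> A \otimes C).
Hypotheses (h1 : linear R1) (h2 : linear R2) (h3 : linear R3).
Hypothesis YB : tmap id R2 \o tassoc \o tmap R3 id \o tassocV \o tmap id R1
    = tassoc \o tmap R1 id \o tassocV \o tmap id R3 \o tassoc
        \o tmap R2 id \o tassocV.

Lemma ybe_sw c b a :
  tlift (fun a1 b1 => tlift (fun a2 c2 => tlift (fun b3 c3 => a2 \ot (b3 \ot c3))
          (R2 (c2 \ot b1))) (R3 (c \ot a1))) (R1 (b \ot a)) =
  tlift (fun b1 c1 => tlift (fun a2 c2 => tlift (fun a3 b3 => a3 \ot (b3 \ot c2))
          (R1 (b1 \ot a2))) (R3 (c1 \ot a))) (R2 (c \ot b)).
Proof.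
have := congr1 (fun f => f (c \ot (b \ot a))) YB; rewrite /=.
rewrite tmapE // tassocVE tmap_tlift //.
setoid_rewrite (tmapE2 h3 (@lin_id _ _)).
rewrite tassoc_tlift.
setoid_rewrite tassocE.
rewrite tmap_tlift //.
setoid_rewrite (tmap_tlift2 (@lin_id _ _) h2).
setoid_rewrite (tmapE2 (@lin_id _ _) h2).
rewrite tassocVE3 tmapE // tassocE tmap_tlift //.
setoid_rewrite (tmapE2 (@lin_id _ _) h3).
rewrite tassocV_tlift.
setoid_rewrite tassocVE.
rewrite tmap_tlift //.
setoid_rewrite (tmap_tlift2 h1 (@lin_id _ _)).
setoid_rewrite (tmapE2 h1 (@lin_id _ _)).
rewrite tassoc_tlift.
setoid_rewrite tassoc_tlift.
setoid_rewrite tassocE.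
rewrite /id => e.
have tr x (t : B \otimes C) : tlift (fun b c => x \ot (b \ot c)) t = x \ot t.
  by rewrite -{2}(tlift_id t) tensr_tlift.
setoid_rewrite tr.
exact: e.
Qed.

Lemma ybe_c (W : lmodType k) (H : A -> B -> C -> W)
  (H1 : forall a b, linear (H a b)) (H2 : forall a c, linear (fun b => H a b c))
  (H3 : forall b c, linear (fun a => H a b c)) c b a :
  tlift (fun a1 b1 => tlift (fun a2 c2 => tlift (fun b3 c3 => H a2 b3 c3)
          (R2 (c2 \ot b1))) (R3 (c \ot a1))) (R1 (b \ot a)) =
  tlift (fun b1 c1 => tlift (fun a2 c2 => tlift (fun a3 b3 => H a3 b3 c2)
          (R1 (b1 \ot a2))) (R3 (c1 \ot a))) (R2 (c \ot b)).
Proof.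
pose g := tlift (fun x (s : B \otimes C) => tlift (H x) s).
have bg : bilin (fun x (s : B \otimes C) => tlift (H x) s).
  split => [x|s]; first by apply: tlift_lin; split => ?; [apply: H1|apply: H2].
  by apply: tlift_param => ? ?; apply: H3.
have lg : linear g by apply: tlift_lin.
have gE x y z : g (x \ot (y \ot z)) = H x y z.
  rewrite /g tliftE // tliftE //; try (split => ?; [apply: H1|apply: H2]).
have := congr1 g (ybe_sw c b a).
rewrite !(lin_tlift2 lg).
setoid_rewrite (lin_tlift2 lg).
setoid_rewrite (lin_tlift2 lg).
by setoid_rewrite gE.
Qed.

End YBE.



Ltac text := apply: tens_ext; [lin2 | lin2 | idtac].


Unset Implicit Arguments.
Theorem theorem2p13 (k : fieldType) (A B C : lmodType k)
  (muA : A -> A -> A) (alA : A -> A)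
  (muB : B -> B -> B) (alB : B -> B)
  (muC : C -> C -> C) (alC : C -> C)
  (R1 : B \otimes A -> A \otimes B)
  (R2 : C \otimes B -> B \otimes C)
  (R3 : C \otimes A -> A \otimes C) :
  HomAssoc muA alA -> HomAssoc muB alB -> HomAssoc muC alC ->
  HomTwisting muA alA muB alB R1 ->
  HomTwisting muB alB muC alC R2 ->
  HomTwisting muA alA muC alC R3 ->
  tmap id R2 \o tassoc \o tmap R3 id \o tassocV \o tmap id R1
    = tassoc \o tmap R1 id \o tassocV \o tmap id R3 \o tassoc
        \o tmap R2 id \o tassocV ->
  let P1 : C \otimes (A \otimes B) -> (A \otimes B) \otimes C :=
    tassocV \o tmap id R2 \o tassoc \o tmap R3 id \o tassocV in
  let P2 : (B \otimes C) \otimes A -> A \otimes (B \otimes C) :=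
    tassoc \o tmap R1 id \o tassocV \o tmap id R3 \o tassoc in
  [/\ HomTwisting (twisted_mul muA muB R1) (twisted_alpha alA alB) muC alC P1,
      HomTwisting muA alA (twisted_mul muB muC R2) (twisted_alpha alB alC) P2,
      (forall x y : (A \otimes B) \otimes C,
         tassoc (twisted_mul (twisted_mul muA muB R1) muC P1 x y)
         = twisted_mul muA (twisted_mul muB muC R2) P2 (tassoc x) (tassoc y)) &
      tassoc \o twisted_alpha (twisted_alpha alA alB) alC
        = twisted_alpha alA (twisted_alpha alB alC) \o tassoc].
Proof.
move=> [mA1 mA2 lA alAm assA] [mB1 mB2 lB alBm assB] [mC1 mC2 lC alCm assC].
move=> HT1 HT2 HT3 YB P1 P2.
have [l1 _ _ _] := HT1; have [l2 _ _ _] := HT2; have [l3 _ _ _] := HT3.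
have bA : bilin muA by split.
have bB : bilin muB by split.
have bC : bilin muC by split.
have lmA : linear (tmul muA) by apply: tlift_lin.
have lmB : linear (tmul muB) by apply: tlift_lin.
have lmC : linear (tmul muC) by apply: tlift_lin.
have bAB : bilin (twisted_mul muA muB R1) := twisted_mul_bilin mA1 mA2 mB1 mB2 l1.
have bBC : bilin (twisted_mul muB muC R2) := twisted_mul_bilin mB1 mB2 mC1 mC2 l2.
have [mAB1 mAB2] := bAB; have [mBC1 mBC2] := bBC.
have lmAB : linear (tmul (twisted_mul muA muB R1)) by apply: tlift_lin.
have lmBC : linear (tmul (twisted_mul muB muC R2)) by apply: tlift_lin.
have lAB : linear (twisted_alpha alA alB) by apply: tmap_lin.
have lBC : linear (twisted_alpha alB alC) by apply: tmap_lin.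
have lP1 : linear P1 by rewrite /P1; lin2.
have lP2 : linear P2 by rewrite /P2; lin2.
have P1E c a b : P1 (c \ot (a \ot b)) =
  tlift (fun a1 c1 => tlift (fun b2 c2 => (a1 \ot b2) \ot c2) (R2 (c1 \ot b))) (R3 (c \ot a)).
  rewrite /P1 /= tassocVE3 tmapE // tassocE tmap_tlift //.
  setoid_rewrite (tmapE2 (@lin_id _ _) l2).
  rewrite tassocV_tlift; setoid_rewrite tassocVE; by [].
have P2E b c a : P2 ((b \ot c) \ot a) =
  tlift (fun a1 c1 => tlift (fun a2 b2 => a2 \ot (b2 \ot c1)) (R1 (b \ot a1))) (R3 (c \ot a)).
  rewrite /P2 /= tassocE3 tmapE // tassocVE tmap_tlift //.
  setoid_rewrite (tmapE2 l1 (@lin_id _ _)).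
  rewrite tassoc_tlift; setoid_rewrite tassocE; by [].
have a3 := twc_alpha lA lC HT3.
have a2 := twc_alpha lB lC HT2.
have a1 := twc_alpha lA lB HT1.
have cA3 := twc_muA mA1 mA2 lC HT3.
have cC3 := twc_muB mC1 mC2 lA HT3.
have cB2 := twc_muA mB1 mB2 lC HT2.
have cC2 := twc_muB mC1 mC2 lB HT2.
have cA1 := twc_muA mA1 mA2 lB HT1.
have cB1 := twc_muB mB1 mB2 lA HT1.
have yb := ybe_c l1 l2 l3 YB.
have mABE := twisted_mulE mA1 mA2 mB1 mB2 l1.
have mBCE := twisted_mulE mB1 mB2 mC1 mC2 l2.
split.
- split => //.
  + apply/funext; text => c t; move: t; text => a b.
    rewrite /= P1E /twisted_alpha tmapE // tmapE // P1E.
    rewrite tmap_tlift //; setoid_rewrite (tmap_tlift2 (tmap_lin lA lB) lC).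
    setoid_rewrite (tmapE2 (tmap_lin lA lB) lC); setoid_rewrite (tmapE2 lA lB).
    rewrite a3; last by bil2.
    apply: tlift_ext => x y.
    rewrite a2 //; bil2.
  + apply/funext; text => c T; move: T; text => X Y; move: X; text => a b.
    move: Y; text => a' b'.
    rewrite /= tmapE // tmulE // mABE tensr_tlift (lin_tlift2 lP1).
    setoid_rewrite P1E.
    under tlift_ext => x y.
      rewrite cA3; last by bil2.
      under tlift_ext => u v.
        under tlift_ext => p q.
          rewrite cB2; last by bil2.
          over.
        over.
      over.
    rewrite tlift_swap.
    under tlift_ext => u v.
      rewrite yb; try (move=> ? ?; lin2).
      over.
    rewrite tassocVE3 tmapE // P1E tensl_tlift; setoid_rewrite tensl_tlift.
    rewrite tassoc_tlift; setoid_rewrite tassoc_tlift; setoid_rewrite tassocE3.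
    try rewrite /id; rewrite tmap_tlift //; setoid_rewrite (tmap_tlift2 (@lin_id _ _) lP1).
    setoid_rewrite (tmapE2 (@lin_id _ _) lP1).
    try rewrite /id; setoid_rewrite P1E.
    do 2 setoid_rewrite tensr_tlift.
    rewrite tassocV_tlift; do 3 setoid_rewrite tassocV_tlift.
    setoid_rewrite tassocVE3.
    rewrite tmap_tlift //; do 3 setoid_rewrite (tmap_tlift2 lmAB lC).
    setoid_rewrite (tmapE2 lmAB lC).
    setoid_rewrite (tmulE2 bAB).
    setoid_rewrite mABE.
    setoid_rewrite tensl_tlift.
    apply: tlift_ext => u v; apply: tlift_ext => p q; apply: tlift_ext => x y.
    by rewrite tlift_swap.
  + apply/funext; text => X T; move: X; text => c c'; move: T; text => a b.
    rewrite /= tmapE // tmulE // /twisted_alpha tmapE // P1E.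
    rewrite cC3; last by bil2.
    under tlift_ext => u v.
      under tlift_ext => x y.
        rewrite cC2; last by bil2.
        over.
      over.
    rewrite tassocE3 tmapE // P1E tensr_tlift; setoid_rewrite tensr_tlift.
    rewrite tassocV_tlift; setoid_rewrite tassocV_tlift; setoid_rewrite tassocVE3.
    rewrite tmap_tlift //; setoid_rewrite (tmap_tlift2 lP1 (@lin_id _ _)).
    setoid_rewrite (tmapE2 lP1 (@lin_id _ _)).
    try rewrite /id; setoid_rewrite P1E.
    setoid_rewrite tensl_tlift; setoid_rewrite tensl_tlift.
    rewrite tassoc_tlift; do 3 setoid_rewrite tassoc_tlift.
    setoid_rewrite tassocE3.
    rewrite tmap_tlift //; do 3 setoid_rewrite (tmap_tlift2 (tmap_lin lA lB) lmC).
    setoid_rewrite (tmapE2 (tmap_lin lA lB) lmC).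
    setoid_rewrite (tmapE2 lA lB); setoid_rewrite (tmulE2 bC).
    apply: tlift_ext => u v; rewrite tlift_swap; by [].
- split => //.
  + apply/funext; text => X a; move: X; text => b c.
    rewrite /= P2E /twisted_alpha tmapE // tmapE // P2E.
    rewrite tmap_tlift //; setoid_rewrite (tmap_tlift2 lA (tmap_lin lB lC)).
    setoid_rewrite (tmapE2 lA (tmap_lin lB lC)); setoid_rewrite (tmapE2 lB lC).
    rewrite a3; last by bil2.
    apply: tlift_ext => x y.
    rewrite a1 //; bil2.
  + apply/funext; text => X Y; move: X; text => b c; move: Y; text => a a'.
    rewrite /= tmapE // tmulE // /twisted_alpha tmapE // P2E.
    rewrite cA3; last by bil2.
    under tlift_ext => u v.
      under tlift_ext => p q.
        rewrite cA1; last by bil2.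
        over.
      over.
    rewrite tassocVE3 tmapE // P2E tensl_tlift; setoid_rewrite tensl_tlift.
    rewrite tassoc_tlift; setoid_rewrite tassoc_tlift; setoid_rewrite tassocE3.
    try rewrite /id; rewrite tmap_tlift //; setoid_rewrite (tmap_tlift2 (@lin_id _ _) lP2).
    setoid_rewrite (tmapE2 (@lin_id _ _) lP2).
    try rewrite /id; setoid_rewrite P2E.
    do 2 setoid_rewrite tensr_tlift.
    rewrite tassocV_tlift; do 3 setoid_rewrite tassocV_tlift.
    setoid_rewrite tassocVE3.
    rewrite tmap_tlift //; do 3 setoid_rewrite (tmap_tlift2 lmA (tmap_lin lB lC)).
    setoid_rewrite (tmapE2 lmA (tmap_lin lB lC)).
    setoid_rewrite (tmulE2 bA); setoid_rewrite (tmapE2 lB lC).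
    apply: tlift_ext => u v; by rewrite tlift_swap.
  + apply/funext; text => Z a; move: Z; text => X Y; move: X; text => b c.
    move: Y; text => b' c'.
    rewrite /= tmapE // tmulE // mBCE tensl_tlift (lin_tlift2 lP2).
    setoid_rewrite P2E.
    under tlift_ext => y z.
      rewrite cC3; last by bil2.
      under tlift_ext => u v.
        under tlift_ext => p q.
          rewrite cB1; last by bil2.
          over.
        over.
      over.
    rewrite tlift_swap.
    under tlift_ext => u v.
      rewrite -yb; try (move=> ? ?; lin2).
      over.
    rewrite tassocE3 tmapE // P2E tensr_tlift; setoid_rewrite tensr_tlift.
    rewrite tassocV_tlift; setoid_rewrite tassocV_tlift; setoid_rewrite tassocVE3.
    try rewrite /id; rewrite tmap_tlift //; setoid_rewrite (tmap_tlift2 lP2 (@lin_id _ _)).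
    setoid_rewrite (tmapE2 lP2 (@lin_id _ _)).
    try rewrite /id; setoid_rewrite P2E.
    do 2 setoid_rewrite tensl_tlift.
    rewrite tassoc_tlift; do 3 setoid_rewrite tassoc_tlift.
    setoid_rewrite tassocE3.
    rewrite tmap_tlift //; do 3 setoid_rewrite (tmap_tlift2 lA lmBC).
    setoid_rewrite (tmapE2 lA lmBC).
    setoid_rewrite (tmulE2 bBC).
    setoid_rewrite mBCE.
    setoid_rewrite tensr_tlift.
    apply: tlift_ext => u v; apply: tlift_ext => p q; apply: tlift_ext => x y.
    by rewrite tlift_swap.
- have bABC : bilin (twisted_mul (twisted_mul muA muB R1) muC P1) :=
    twisted_mul_bilin mAB1 mAB2 mC1 mC2 lP1.
  have bABC' : bilin (twisted_mul muA (twisted_mul muB muC R2) P2) :=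
    twisted_mul_bilin mA1 mA2 mBC1 mBC2 lP2.
  have [mX1 mX2] := bABC; have [mY1 mY2] := bABC'.
  have mXE := twisted_mulE mAB1 mAB2 mC1 mC2 lP1.
  have mYE := twisted_mulE mA1 mA2 mBC1 mBC2 lP2.
  move=> x y; move: x; text => X c; move: X; text => a b.
  move: y; text => Y c'; move: Y; text => a' b'.
  rewrite mXE P1E tlift_tlift; last by bil2.
  have bF : bilin (fun X z => twisted_mul muA muB R1 (a \ot b) X \ot muC z c').
    by bil2.
  setoid_rewrite (tlift_tlift2 bF); setoid_rewrite (tliftE2 bF).
  setoid_rewrite mABE; setoid_rewrite tensl_tlift.
  rewrite tassoc_tlift; do 2 setoid_rewrite tassoc_tlift; setoid_rewrite tassocE3.
  rewrite ?tassocE3 mYE P2E tlift_tlift; last by bil2.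
  have bG : bilin (fun x Y => muA a x \ot twisted_mul muB muC R2 Y (b' \ot c')).
    by bil2.
  setoid_rewrite (tlift_tlift2 bG); setoid_rewrite (tliftE2 bG).
  setoid_rewrite mBCE; setoid_rewrite tensr_tlift.
  apply: tlift_ext => u v; by rewrite tlift_swap.
- apply/funext; text => t c; move: t; text => a b.
  by rewrite /= /twisted_alpha !tmapE // !tassocE3 !tmapE //; lin2.
Qed.
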